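(* Let $K$ be a positive semiring and let $R$ and $S$ be $K$-relations over finite sets of attributes $X$ and $Y$. The following are equivalent: (a) $R$ and $S$ are consistent; (b) $R[X\cap Y]\equiv S[X\cap Y]$; (c) the ordinary relations $R'$ and $S'$ are consistent (i.e., $R'[X\cap Y]=S'[X\cap Y]$, where $P[W]=\{t[W]:t\in P\}$) and $R\Join S\equiv S\Join R$; (d) $R\equiv (R\Join S)[X]$ and $S\equiv (R\Join S)[Y]$.
   Context: A commutative semiring $(K,+,\cdot,0,1)$ with $0\neq 1$ is positive if $a+b=0$ implies $a=b=0$, and $ab=0$ implies $a=0$ or $b=0$. Each attribute $A$ has a domain $\mathrm{Dom}(A)$. For a finite set of attributes $X$, $\mathrm{Tup}(X)$ is the set of maps assigning to each $A\in X$ an element of $\mathrm{Dom}(A)$; for $Y\subseteq X$, $t[Y]$ is the restriction of $t$ to $Y$; $XY$ denotes $X\cup Y$. A $K$-relation over $X$ is a map $R:\mathrm{Tup}(X)\to K$ with finite support $R'=\{t: R(t)\neq 0\}$. For $Y\subseteq X$, the marginal $R[Y]$ is the $K$-relation over $Y$ with $R[Y](u)=\sum_{r\in R',\, r[Y]=u} R(r)$. For $a\in K$, $aR$ is $t\mapsto aR(t)$. $R\equiv S$ (same attribute set) means $aR=bS$ for some nonzero $a,b\in K$. $K$-relations $R$ over $X$ and $S$ over $Y$ are consistent if there is a $K$-relation $T$ over $XY$ with $R\equiv T[X]$ and $S\equiv T[Y]$. For a $K$-relation $T$ over $Y$, $Z\subseteq Y$ and $u\in\mathrm{Tup}(Z)$,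 set $c_T(u)=\prod_{v\in T[Z]',\, v\neq u}T[Z](v)$ (empty product equals $1$). The join of $R$ over $X$ and $S$ over $Y$ is the $K$-relation over $XY$ defined by $(R\Join S)(t)=R(t[X])\,S(t[Y])\,c_S(t[X\cap Y])$, with $Z=X\cap Y$. *)

(* Defs.v *)
From HB Require Import structures.
From mathcomp Require Import all_boot all_order all_algebra.
From mathcomp Require Import finmap.
Set Implicit Arguments.
Unset Strict Implicit.
Unset Printing Implicit Defensive.
Import GRing.Theory.
Local Open Scope fset_scope.
Local Open Scope fmap_scope.
Local Open Scope ring_scope.

(* Positive commutative semiring (0 <> 1 is built into comNzSemiRingType). *)
Definition positive_semiring (K : comNzSemiRingType) : Prop :=
  (forall a b : K, a + b = 0 -> a = 0 /\ b = 0) /\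
  (forall a b : K, a * b = 0 -> a = 0 \/ b = 0).

Section KRel.
Variables (K : comNzSemiRingType) (Att V : choiceType).

Definition tuple := {fmap Att -> V}.

Definition is_tuple (Dom : Att -> V -> Prop) (X : {fset Att}) (t : tuple) : Prop :=
  domf t = X /\ (forall a v, t.[? a] = Some v -> Dom a v).

Definition krel := {fsfun tuple -> K with 0}.

Definition is_krel (Dom : Att -> V -> Prop) (X : {fset Att}) (R : krel) : Prop :=
  forall t, R t != 0 -> is_tuple Dom X t.

Definition restr (t : tuple) (Y : {fset Att}) : tuple := t.[& Y].

Definition proj (P : {fset tuple}) (W : {fset Att}) : {fset tuple} :=
  [fset restr t W | t in P].

Definition marginal (R : krel) (Y : {fset Att}) : krel :=
  [fsfun u in proj (finsupp R) Y =>
     \sum_(r <- finsupp R | restr r Y == u) R r | 0].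

Definition krel_equiv (R S : krel) : Prop :=
  exists a b : K, [/\ a != 0, b != 0 & forall t, a * R t = b * S t].

Definition consistent (Dom : Att -> V -> Prop) (X Y : {fset Att}) (R S : krel) : Prop :=
  exists T : krel, [/\ is_krel Dom (X `|` Y) T,
                      krel_equiv R (marginal T X) & krel_equiv S (marginal T Y)].

Definition cfactor (T : krel) (Z : {fset Att}) (u : tuple) : K :=
  \prod_(v <- finsupp (marginal T Z) | v != u) marginal T Z v.

(* join R |><| S (R over X, S over Y); its support consists of tuples
   t over XY with t[X] in R', t[Y] in S', all of which are unions r + s. *)
Definition join (X Y : {fset Att}) (R S : krel) : krel :=
  [fsfun t in [fset (catf r s : tuple) | r : tuple in finsupp R, s : tuple in finsupp S] =>
     R (restr t X) * S (restr t Y) * cfactor S (X `&` Y) (restr t (X `&` Y)) | 0].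

End KRel.

(* Main.v *)
Require Import Defs.
From HB Require Import structures.
From mathcomp Require Import all_boot all_order all_algebra.
From mathcomp Require Import finmap.
Set Implicit Arguments.
Unset Strict Implicit.
Unset Printing Implicit Defensive.
Import GRing.Theory.
Local Open Scope fset_scope.
Local Open Scope fmap_scope.

Section Tup.
Variables (Att V : choiceType).
Implicit Types (t r s : Defs.tuple Att V) (X Y A B : {fset Att}).

Lemma restr_restr t A B : restr (restr t A) B = restr t (A `&` B).
Proof. exact: restrictf_comp. Qed.

Lemma restr_sub t A B : B `<=` A -> restr (restr t A) B = restr t B.
Proof. by move=> BA; rewrite restr_restr; congr restr; apply/fsetIidPr. Qed.

Lemma catf_restrX r s X Y : domf r = X -> domf s = Y ->
  restr r (X `&` Y) = restr s (X `&` Y) ->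
  restr (catf r s) X = r /\ restr (catf r s) Y = s.
Proof.
move=> dr ds e; split; last by rewrite /restr -ds restrictf_cat_domr.
apply/fmapP=> k; rewrite fnd_restrict fnd_cat.
have ek := congr1 (fun f : Defs.tuple Att V => f.[? k]) e; rewrite /= !fnd_restrict in ek.
case: ifPn => kX.
  case: ifPn => // kY; rewrite ds in kY.
  by move: ek; rewrite in_fsetI kX kY.
rewrite not_fnd //; apply: contra kX => kr; rewrite -dr; exact: kr.
Qed.

Lemma catf_restr_self t X Y : domf t `<=` X `|` Y ->
  catf (restr t X) (restr t Y) = t.
Proof.
move=> sub; apply/fmapP=> k; rewrite fnd_cat !fnd_restrict /restr domf_restrict in_fsetI.
case kY: (k \in Y) => /=.
  case kt: (k \in domf t) => //=; case: ifP => // _; by rewrite not_fnd // kt.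
case: ifPn => // kX; rewrite not_fnd //; apply/negP => /(fsubsetP sub).
by rewrite in_fsetU (negPf kX) kY.
Qed.

End Tup.

Local Open Scope ring_scope.

Section KR.
Variables (K : comNzSemiRingType) (HK : positive_semiring K) (Att V : choiceType).
Local Notation tup := (Defs.tuple Att V).
Local Notation kr := (krel K Att V).
Implicit Types (R S T : kr) (X Y Z : {fset Att}).

Lemma mulf_neq0' (a b : K) : a != 0 -> b != 0 -> a * b != 0.
Proof. by move=> a0 b0; apply/eqP => /(proj2 HK) [] /eqP; apply/negP. Qed.

Lemma expf_neq0' (a : K) n : a != 0 -> a ^+ n != 0.
Proof. by move=> a0; elim: n => [|n IH]; rewrite ?expr0 ?oner_neq0 // exprS mulf_neq0'. Qed.

Lemma psum_eq0 (I : eqType) (s : seq I) (P : pred I) (F : I -> K) :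
  \sum_(i <- s | P i) F i = 0 -> forall i, i \in s -> P i -> F i = 0.
Proof.
elim: s => [|x s IH] //=; rewrite big_cons; case: ifP => Px.
  move=> /(proj1 HK) [h1 h2] i; rewrite in_cons => /orP[/eqP -> //|]; exact: IH.
by move=> h i; rewrite in_cons => /orP[/eqP ->|]; [rewrite Px | exact: IH].
Qed.

Lemma prod_neq0 (I : eqType) (s : seq I) (P : pred I) (F : I -> K) :
  (forall i, i \in s -> P i -> F i != 0) -> \prod_(i <- s | P i) F i != 0.
Proof.
elim: s => [|x s IH] /= h; rewrite ?big_nil ?oner_neq0 // big_cons.
case: ifP => Px; last by apply: IH => i hi; apply: h; rewrite in_cons hi orbT.
apply: mulf_neq0'; first by apply: h; rewrite ?in_cons ?eqxx.
by apply: IH => i hi; apply: h; rewrite in_cons hi orbT.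
Qed.

Lemma sum_single (I : eqType) (s : seq I) j (F : I -> K) :
  j \in s -> uniq s -> (forall i, i \in s -> i != j -> F i = 0) ->
  \sum_(i <- s) F i = F j.
Proof.
move=> js us h; rewrite (bigD1_seq j js us) /= big1_seq ?addr0 //.
by move=> i /andP[ij iS]; apply: h.
Qed.

Lemma marginalE R Z u :
  marginal R Z u = \sum_(r <- finsupp R | restr r Z == u) R r.
Proof.
rewrite /marginal fsfunE; case: ifPn => // uN; apply/esym/big1_seq => r /andP[/eqP ru rin].
exfalso; apply: (negP uN); apply/imfsetP; exists r => //.
Qed.

Lemma supp_marginal R Z : finsupp (marginal R Z) = proj (finsupp R) Z.
Proof.
apply/fsetP => u; rewrite mem_finsupp marginalE /=.
apply/idP/idP.
  apply: contraR => uN; apply/eqP/big1_seq => r /andP[/eqP ru rin].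
  by exfalso; apply: (negP uN); apply/imfsetP; exists r.
move=> /imfsetP [r rin ->]; apply/eqP => /psum_eq0 h.
have r0 := h r rin (eqxx _).
by move: rin; rewrite mem_finsupp r0 /= eqxx.
Qed.

Lemma equiv_supp R S (a b : K) : a != 0 -> b != 0 ->
  (forall t, a * R t = b * S t) -> finsupp R = finsupp S.
Proof.
move=> a0 b0 e; apply/fsetP => t; rewrite !mem_finsupp /=.
apply/idP/idP; apply: contra => /eqP h.
  have := e t; rewrite h mulr0 => h2.
  have [a00|->] // := proj2 HK _ _ h2; by rewrite a00 eqxx in a0.
have := e t; rewrite h mulr0 => /esym h2.
have [b00|->] // := proj2 HK _ _ h2; by rewrite b00 eqxx in b0.
Qed.

Lemma marginal_scale R S (a b : K) Z : a != 0 -> b != 0 ->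
  (forall t, a * R t = b * S t) -> forall u, a * marginal R Z u = b * marginal S Z u.
Proof.
move=> a0 b0 e u; rewrite !marginalE (equiv_supp a0 b0 e) !mulr_sumr.
by apply: eq_bigr => r _; rewrite e.
Qed.

Lemma marg_marg T X Z : Z `<=` X -> forall u,
  marginal (marginal T X) Z u = marginal T Z u.
Proof.
move=> ZX u; rewrite marginalE supp_marginal.
under eq_bigr do rewrite marginalE big_mkcond.
rewrite exchange_big /= [RHS]marginalE [RHS]big_mkcond /=.
apply: eq_big_seq => r rin.
rewrite big_mkcond /= (@sum_single _ _ (restr r X)) ?fset_uniq //.
- by rewrite eqxx restr_sub.
- by apply/imfsetP; exists r.
- by move=> w _ /negPf; rewrite eq_sym => ->; case: ifP.
Qed.

Lemma sum_supp R (s : seq tup) (P : pred tup) :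
  uniq s -> {subset finsupp R <= s} ->
  \sum_(t <- s | P t) R t = \sum_(t <- finsupp R | P t) R t.
Proof.
move=> us sub; rewrite (bigID (fun t => t \in finsupp R)) /=.
rewrite [X in _ + X]big1 ?addr0; last by move=> t /andP[_ /fsfun_dflt].
rewrite (eq_bigl (fun t => (t \in finsupp R) && P t)); last by move=> t; rewrite andbC.
rewrite -big_filter_cond; apply: perm_big; apply: uniq_perm.
- exact: filter_uniq.
- exact: fset_uniq.
- by move=> t; rewrite mem_filter; case: (boolP (t \in finsupp R)) => // /sub ->.
Qed.

Lemma sum_reindex R (I : eqType) (s : seq I) (g : I -> tup) (P : pred tup) :
  uniq s -> {in s &, injective g} -> (forall t, R t != 0 -> exists2 i, i \in s & g i = t) ->
  \sum_(t <- finsupp R | P t) R t = \sum_(i <- s | P (g i)) R (g i).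
Proof.
move=> us ig sur; rewrite -[RHS](big_map g) sum_supp //.
  by rewrite (map_inj_in_uniq ig).
move=> t; rewrite mem_finsupp => /sur [i iS <-]; exact: map_f.
Qed.

Section Join.
Variables (Dom : Att -> V -> Prop) (X Y : {fset Att}) (R S : kr).
Hypotheses (HR : is_krel Dom X R) (HS : is_krel Dom Y S).

Lemma domR r : r \in finsupp R -> domf r = X.
Proof. by rewrite mem_finsupp => /HR []. Qed.
Lemma domS s : s \in finsupp S -> domf s = Y.
Proof. by rewrite mem_finsupp => /HS []. Qed.

Lemma join_val r s : r \in finsupp R -> s \in finsupp S ->
  restr r (X `&` Y) = restr s (X `&` Y) ->
  join X Y R S (catf r s) = R r * S s * cfactor S (X `&` Y) (restr r (X `&` Y)).
Proof.
move=> rin sin e; rewrite /join fsfunE.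
have [e1 e2] := catf_restrX (domR rin) (domS sin) e.
case: ifPn => [_|/negP []]; last by apply/imfset2P; exists r => //; exists s.
by rewrite e1 e2 -(@restr_sub _ _ _ X) ?fsubsetIl // e1.
Qed.

Lemma join_supp t : join X Y R S t != 0 ->
  [/\ restr t X \in finsupp R, restr t Y \in finsupp S,
      restr (restr t X) (X `&` Y) = restr (restr t Y) (X `&` Y) &
      catf (restr t X) (restr t Y) = t].
Proof.
rewrite /join fsfunE; case: ifPn => [/imfset2P [r rin [s sin ->]] | _]; last by rewrite eqxx.
move=> h.
have dt : domf (catf r s) = X `|` Y by rewrite domf_cat (domR rin) (domS sin).
split.
- rewrite mem_finsupp; apply: contra h => /eqP ->; by rewrite !mul0r.
- rewrite mem_finsupp; apply: contra h => /eqP ->; by rewrite mulr0 mul0r.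
- by rewrite !restr_sub ?fsubsetIl ?fsubsetIr.
- by apply: catf_restr_self; rewrite dt.
Qed.

Lemma marg_join w : marginal (join X Y R S) X w =
  R w * (cfactor S (X `&` Y) (restr w (X `&` Y)) * marginal S (X `&` Y) (restr w (X `&` Y))).
Proof.
set Z := X `&` Y.
pose L := [seq (r, s) | r <- finsupp R, s <- finsupp S].
pose ps := [seq p <- L | restr p.1 Z == restr p.2 Z].
have psP p : p \in ps -> [/\ p.1 \in finsupp R, p.2 \in finsupp S & restr p.1 Z = restr p.2 Z].
  rewrite mem_filter => /andP[/eqP e /allpairsP [[a b] [ain bin /= pe]]].
  by rewrite pe /=; rewrite pe in e.
rewrite marginalE (@sum_reindex _ _ ps (fun p => catf p.1 p.2)); first last.
- move=> t /join_supp [xin yin e <-]; exists (restr t X, restr t Y) => //.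
  by rewrite mem_filter /= e eqxx /=; apply: allpairs_f.
- move=> [r1 s1] [r2 s2] /psP [/= r1in s1in e1] /psP [/= r2in s2in e2] /= eq.
  have [a1 b1] := catf_restrX (domR r1in) (domS s1in) e1.
  have [a2 b2] := catf_restrX (domR r2in) (domS s2in) e2.
  by congr pair; [rewrite -a1 eq a2 | rewrite -b1 eq b2].
- rewrite filter_uniq // allpairs_uniq ?fset_uniq //.
  by move=> [a b] [c d] _ _ /= [-> ->].
rewrite big_filter_cond big_mkcond big_allpairs /=.
transitivity (\sum_(r <- finsupp R) (if r == w then
   R r * (cfactor S Z (restr r Z) * marginal S Z (restr r Z)) else 0)).
  apply: eq_big_seq => r rin.
  case: (eqVneq r w) => [<-|rw].
    rewrite marginalE mulr_sumr mulr_sumr [RHS]big_mkcond /=.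
    apply: eq_big_seq => s sin.
    case: eqP => e /=.
      have [e1 _] := catf_restrX (domR rin) (domS sin) e.
      rewrite e1 eqxx join_val // -e eqxx.
      by rewrite -mulrA [S s * _]mulrC.
    by have -> : (restr s Z == restr r Z) = false by apply/eqP => h; apply: e; rewrite h.
  apply: big1_seq => s /andP[_ sin]; case: eqP => //= e.
  have [e1 _] := catf_restrX (domR rin) (domS sin) e.
  by rewrite e1 (negPf rw).
case: (boolP (w \in finsupp R)) => win.
  rewrite (@sum_single _ _ w) ?fset_uniq ?eqxx //.
  by move=> r _ /negPf ->.
rewrite big1_seq; first by rewrite fsfun_dflt // mul0r.
by move=> r /andP[_ rin]; case: eqP => // rw; rewrite -rw rin in win.
Qed.

End Join.

Lemma prod_scale (I : eqType) (s : seq I) (P : pred I) (a : K) (F : I -> K) :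
  \prod_(i <- s | P i) (a * F i) = a ^+ count P s * \prod_(i <- s | P i) F i.
Proof.
elim: s => [|x s IH] /=; first by rewrite !big_nil expr0 mulr1.
rewrite !big_cons; case: ifP => Px; last by rewrite IH.
by rewrite IH /= exprS -!mulrA; congr (_ * _); rewrite mulrCA.
Qed.

Lemma count_neq (I : eqType) (s : seq I) u : uniq s -> u \in s ->
  count (fun v => v != u) s = (size s).-1.
Proof.
move=> us uin; have := count_predC (pred1 u) s.
rewrite count_uniq_mem // uin add1n => <- /=; done.
Qed.

Lemma marg_join_equiv (Dom : Att -> V -> Prop) X Y R S
  (HR : is_krel Dom X R) (HS : is_krel Dom Y S) :
  proj (finsupp R) (X `&` Y) = proj (finsupp S) (X `&` Y) ->
  forall w, (\prod_(v <- finsupp (marginal S (X `&` Y))) marginal S (X `&` Y) v) * R w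
    = marginal (join X Y R S) X w.
Proof.
move=> hp w; rewrite (marg_join HR HS).
case: (boolP (w \in finsupp R)) => win; last by rewrite fsfun_dflt // !mulr0 mul0r.
have uin : restr w (X `&` Y) \in finsupp (marginal S (X `&` Y)).
  by rewrite supp_marginal -hp; apply/imfsetP; exists w.
rewrite (bigD1_seq _ uin (fset_uniq _)) /= /cfactor.
by rewrite mulrC [_ * marginal _ _ _]mulrC.
Qed.

Lemma is_krel_join (Dom : Att -> V -> Prop) X Y R S
  (HR : is_krel Dom X R) (HS : is_krel Dom Y S) : is_krel Dom (X `|` Y) (join X Y R S).
Proof.
move=> t; rewrite /join fsfunE; case: ifPn => [/imfset2P [r rin [s sin ->]] _ | _]; last by rewrite eqxx.
move: rin sin; rewrite !mem_finsupp => /HR [dr vr] /HS [ds vs].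
split; first by rewrite domf_cat dr ds.
by move=> a v; rewrite fnd_cat; case: ifP => _; [apply: vs | apply: vr].
Qed.

Lemma mem_joinset (Dom : Att -> V -> Prop) A B (P Q : kr)
  (HP : is_krel Dom A P) (HQ : is_krel Dom B Q) (t : tup) :
  restr t A \in finsupp P -> restr t B \in finsupp Q ->
  (t \in [fset (catf r s : tup) | r : tup in finsupp P, s : tup in finsupp Q])
    = (domf t == A `|` B).
Proof.
move=> xin yin; apply/idP/idP.
  move=> /imfset2P [r rin [s sin ->]]; by rewrite domf_cat (domR HP rin) (domS HQ sin).
move=> /eqP dt; apply/imfset2P; exists (restr t A) => //; exists (restr t B) => //.
by rewrite catf_restr_self // dt.
Qed.

End KR.

Theorem lemma7 (K : comNzSemiRingType) (HK : positive_semiring K)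
  (Att V : choiceType) (Dom : Att -> V -> Prop) (X Y : {fset Att})
  (R S : krel K Att V) (HR : is_krel Dom X R) (HS : is_krel Dom Y S) :
  [<-> consistent Dom X Y R S;
       krel_equiv (marginal R (X `&` Y)) (marginal S (X `&` Y));
       proj (finsupp R) (X `&` Y) = proj (finsupp S) (X `&` Y) /\
         krel_equiv (join X Y R S) (join Y X S R);
       krel_equiv R (marginal (join X Y R S) X) /\
         krel_equiv S (marginal (join X Y R S) Y)].
Proof.
tfae.
- case=> T [_ [a [b [a0 b0 eR]]] [c [d [c0 d0 eS]]]].
  have eR' := marginal_scale HK (X `&` Y) a0 b0 eR.
  have eS' := marginal_scale HK (X `&` Y) c0 d0 eS.
  exists (d * a), (b * c); split; [exact: mulf_neq0' | exact: mulf_neq0' | move=> u].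
  have h1 := eR' u; have h2 := eS' u.
  rewrite (marg_marg HK _ (fsubsetIl _ _)) in h1.
  rewrite (marg_marg HK _ (fsubsetIr _ _)) in h2.
  by rewrite -!mulrA h1 h2 mulrCA.
- case=> a [b [a0 b0 e]].
  have hs := equiv_supp HK a0 b0 e.
  have hp : proj (finsupp R) (X `&` Y) = proj (finsupp S) (X `&` Y).
    by rewrite -!supp_marginal // hs.
  split => //.
  set n := (size (finsupp (marginal R (X `&` Y)))).-1.
  exists (b ^+ n), (a ^+ n); split; [exact: expf_neq0' | exact: expf_neq0' | move=> t].
  rewrite /join !fsfunE [Y `&` X]fsetIC.
  case: (eqVneq (R (restr t X) * S (restr t Y)) 0) => [z|nz].
    rewrite [S (restr t Y) * _]mulrC z !mul0r.
    by case: ifP; case: ifP => _ _ /=; rewrite ?mulr0 ?mul0r.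
  have xin : restr t X \in finsupp R.
    by rewrite mem_finsupp; apply: contra nz => /eqP ->; rewrite mul0r.
  have yin : restr t Y \in finsupp S.
    by rewrite mem_finsupp; apply: contra nz => /eqP ->; rewrite mulr0.
  rewrite (mem_joinset HR HS xin yin) (mem_joinset HS HR yin xin) fsetUC.
  case: eqP => _; last by rewrite /= !mulr0.
  set u := restr t (X `&` Y).
  have uin : u \in finsupp (marginal R (X `&` Y)).
    rewrite supp_marginal //; apply/imfsetP; exists (restr t X) => //.
    by rewrite restr_sub ?fsubsetIl.
  have key : a ^+ n * cfactor R (X `&` Y) u = b ^+ n * cfactor S (X `&` Y) u.
    rewrite /cfactor -hs /n -(count_neq (fset_uniq _) uin) -!prod_scale.
    by apply: eq_bigr => v _; rewrite e.
  by rewrite [S _ * R _]mulrC mulrCA [RHS]mulrCA key.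
- case=> hp [al [be [al0 be0 ej]]]; split.
    exists (\prod_(v <- finsupp (marginal S (X `&` Y))) marginal S (X `&` Y) v), 1.
    split; [| exact: oner_neq0 | move=> t; rewrite mul1r (marg_join_equiv HK HR HS hp)] => //.
    by apply: prod_neq0 => // v; rewrite mem_finsupp => h _; exact: h.
  have hp' : proj (finsupp S) (Y `&` X) = proj (finsupp R) (Y `&` X) by rewrite fsetIC hp.
  have e2 := marg_join_equiv HK HS HR hp'.
  have e3 := marginal_scale HK Y al0 be0 ej.
  exists (be * \prod_(v <- finsupp (marginal R (Y `&` X))) marginal R (Y `&` X) v), al.
  split; [ | exact: al0 | by move=> u; rewrite -mulrA e2 e3].
  apply: mulf_neq0' => //; apply: prod_neq0 => // v; rewrite mem_finsupp => h _; exact: h.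
- case=> h1 h2; exists (join X Y R S); split => //; exact: (is_krel_join HR HS).
Qed.
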